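(* Let $\mathfrak a$ be a finite-dimensional real Euclidean vector space, let $\Delta\subset\mathfrak a^*$ be a reduced root system (i.e. $2\alpha\notin\Delta$ for all $\alpha\in\Delta$) with a chosen set of positive roots $\Delta^+$, and let $m:\Delta\to\mathbb R$, $\alpha\mapsto m_\alpha$, be a Weyl-group-invariant multiplicity function such that $m_\alpha\in 2\mathbb N$ for all $\alpha\in\Delta$. Put $\rho:=\frac12\sum_{\alpha\in\Delta^+}m_\alpha\alpha$ and $\rho_\alpha:=\langle\rho,\alpha\rangle/\langle\alpha,\alpha\rangle$. Then $\rho_\alpha\ge m_\alpha/2$ for every $\alpha\in\Delta^+$.
   Context: $\langle\cdot,\cdot\rangle$ denotes the inner product of $\mathfrak a$ transferred to $\mathfrak a^*$. *)

(* Defs.v *)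
From HB Require Import structures.
From mathcomp Require Import all_boot all_order all_algebra.
From mathcomp Require Import reals.
Set Implicit Arguments. Unset Strict Implicit. Unset Printing Implicit Defensive.
Import Order.TTheory GRing.Theory Num.Theory.
Local Open Scope ring_scope.

(* The Euclidean space a^* is modelled as R^n = 'rV[R]_n with the standard
   inner product (every finite-dimensional real Euclidean space is isometric
   to such a space). *)
Definition dotp (R : realType) (n : nat) (u v : 'rV[R]_n) : R := (u *m v^T) 0 0.

Definition refl (R : realType) (n : nat) (a b : 'rV[R]_n) : 'rV[R]_n :=
  b - (2 * dotp b a / dotp a a) *: a.

Definition root_system (R : realType) (n : nat) (D : seq 'rV[R]_n) : Prop :=
  [/\ uniq D,
      (0 : 'rV[R]_n) \notin D,
      (<<D>>%VS == fullv),
      (forall a b, a \in D -> b \in D -> refl a b \in D) &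
      (forall a b, a \in D -> b \in D ->
         exists k : int, 2 * dotp b a / dotp a a = k%:~R)].

Definition reduced_rs (R : realType) (n : nat) (D : seq 'rV[R]_n) : Prop :=
  forall a, a \in D -> 2%:R *: a \notin D.

(* A choice of positive roots: those positive on a regular vector v. *)
Definition regular_for (R : realType) (n : nat) (D : seq 'rV[R]_n) (v : 'rV[R]_n) : Prop :=
  forall a, a \in D -> dotp v a != 0.

Definition pos_roots (R : realType) (n : nat) (D : seq 'rV[R]_n) (v : 'rV[R]_n) :
  seq 'rV[R]_n := [seq a <- D | 0 < dotp v a].

(* Weyl-group invariance (W is generated by the reflections s_a, a in D). *)
Definition weyl_invariant (R : realType) (n : nat) (D : seq 'rV[R]_n) (m : 'rV[R]_n -> R) : Prop :=
  forall a b, a \in D -> b \in D -> m (refl a b) = m b.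

Definition rho (R : realType) (n : nat) (D : seq 'rV[R]_n) (v : 'rV[R]_n) (m : 'rV[R]_n -> R) :
  'rV[R]_n := 2^-1 *: \sum_(a <- pos_roots D v) m a *: a.

(* Main.v *)
Require Import Defs.
From HB Require Import structures.
From mathcomp Require Import all_boot all_order all_algebra.
From mathcomp Require Import reals ring lra.
Import Order.TTheory GRing.Theory Num.Theory.
Local Open Scope ring_scope.

Section Aux.
Variables (R : realType) (n : nat).
Implicit Types (a b u w x : 'rV[R]_n).

Lemma dotpE u w : dotp u w = \sum_j u 0 j * w 0 j.
Proof. by rewrite /dotp mxE; apply: eq_bigr => j _; rewrite mxE. Qed.

Lemma dotpC u w : dotp u w = dotp w u.
Proof. by rewrite !dotpE; apply: eq_bigr => j _; rewrite mulrC. Qed.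

Lemma dotpDl u w x : dotp (u + w) x = dotp u x + dotp w x.
Proof. by rewrite /dotp mulmxDl !mxE. Qed.

Lemma dotpZl k u x : dotp (k *: u) x = k * dotp u x.
Proof. by rewrite /dotp -scalemxAl mxE. Qed.

Lemma dotpBl u w x : dotp (u - w) x = dotp u x - dotp w x.
Proof. by rewrite /dotp mulmxBl !mxE. Qed.

Lemma dotp_suml (I : Type) (r : seq I) (F : I -> 'rV[R]_n) x :
  dotp (\sum_(i <- r) F i) x = \sum_(i <- r) dotp (F i) x.
Proof. by rewrite /dotp mulmx_suml summxE. Qed.

Lemma dotp_gt0 u : u != 0 -> 0 < dotp u u.
Proof.
move=> nz; rewrite dotpE lt_neqAle sumr_ge0 ?andbT; last by move=> j _; rewrite -expr2 sqr_ge0.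
apply/eqP=> /esym/eqP; rewrite psumr_eq0; last by move=> j _; rewrite -expr2 sqr_ge0.
move=> /allP H; apply/negP: nz; rewrite negbK; apply/eqP/rowP => j.
have := H j (mem_index_enum j); rewrite /= mulf_eq0 orbb => /eqP ->.
by rewrite mxE.
Qed.

Lemma reflK a b : dotp a a != 0 -> refl a (refl a b) = b.
Proof.
move=> aa; rewrite /refl dotpBl dotpZl.
set c := dotp b a; set d := dotp a a.
have -> : 2 * (c - 2 * c / d * d) / d = - (2 * c / d).
  by rewrite mulrAC divfK // mulrBr mulrA; field.
by rewrite scaleNr opprK subrK.
Qed.

Lemma refl_dot a b : dotp a a != 0 -> dotp (refl a b) a = - dotp b a.
Proof. by move=> aa; rewrite /refl dotpBl dotpZl divfK //; ring. Qed.
End Aux.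

Lemma refl_self (R : realType) (n : nat) (a : 'rV[R]_n) : dotp a a != 0 -> refl a a = - a.
Proof.
move=> aa; rewrite /refl mulfK //.
by rewrite scaler_nat mulr2n opprD addrA subrr add0r.
Qed.

Theorem lemma1p1 (R : realType) (n : nat) (D : seq 'rV[R]_n) (v : 'rV[R]_n)
  (m : 'rV[R]_n -> R) :
  root_system D -> reduced_rs D -> regular_for D v ->
  weyl_invariant D m ->
  (forall a, a \in D -> exists k : nat, m a = (2 * k)%:R) ->
  forall a, a \in pos_roots D v ->
    m a / 2 <= dotp (rho D v m) a / dotp a a.
Proof.
move=> [uD D0 _ reflD _] _ _ winv mev a aP.
have := aP; rewrite mem_filter => /andP [va aD].
have anz : a != 0 by apply: contraNneq D0 => <-.
have aa := dotp_gt0 _ _ _ anz.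
have aa0 : dotp a a != 0 by rewrite gt_eqF.
have mge0 b : b \in D -> 0 <= m b.
  by move=> /mev [k ->]; rewrite ler0n.
set P := pos_roots D v.
have uP : uniq P by rewrite filter_uniq.
set s := refl a.
set f := fun b => m b * dotp b a.
have sK : cancel s s by move=> b; apply: reflK.
have dvs b : dotp v (s b) = dotp v b - 2 * dotp b a / dotp a a * dotp v a.
  by rewrite /s /refl dotpC dotpBl dotpZl ![dotp v _]dotpC.
have rhoE : dotp (rho D v m) a = 2^-1 * \sum_(b <- P) f b.
  rewrite /rho dotpZl dotp_suml; congr (_ * _).
  by apply: eq_bigr => b _; rewrite dotpZl.
rewrite (bigD1_seq a aP uP) /= in rhoE.
set Q := fun b => 0 < dotp v (s b).
have X1 : \sum_(b <- P | (b != a) && Q b) f b = 0.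
  rewrite -big_filter.
  set T := [seq _ <- _ | _].
  have memT b : (b \in T) = [&& b \in D, 0 < dotp v b, b != a & Q b].
    by rewrite !mem_filter; case: (b \in D); case: (0 < dotp v b); case: (b != a); case: (Q b).
  have sT b : b \in T -> s b \in T.
    rewrite !memT => /and4P [bD vb ba Qb].
    rewrite reflD //=; move: Qb; rewrite /Q sK => ->; rewrite vb andbT.
    apply/negP => /eqP sba.
    have : b = - a by rewrite -(sK b) sba /s refl_self.
    move=> bE; move: vb; rewrite bE dotpC -scaleN1r dotpZl dotpC.
    by rewrite mulN1r oppr_gt0 ltNge (ltW va).
  have pT : perm_eq T (map s T).
    apply: uniq_perm.
    - by rewrite filter_uniq.
    - by rewrite (map_inj_uniq (can_inj sK)) filter_uniq.
    move=> b; apply/idP/idP.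
    + by move=> bT; rewrite -(sK b); apply: map_f; apply: sT.
    + by move=> /mapP [b' b'T ->]; apply: sT.
  have E : \sum_(b <- T) f b = - \sum_(b <- T) f b.
    rewrite {1}(perm_big _ pT) big_map -sumrN big_seq [RHS]big_seq.
    apply: eq_bigr => b bT.
    have bD : b \in D by move: bT; rewrite memT => /and4P [].
    by rewrite /f winv // refl_dot // mulrN.
  lra.
have X2 : 0 <= \sum_(b <- P | (b != a) && ~~ Q b) f b.
  rewrite big_seq_cond; apply: sumr_ge0 => b /andP [bP /andP [ba nQ]].
  move: bP; rewrite mem_filter => /andP [vb bD].
  apply: mulr_ge0; first exact: mge0.
  have [//|neg] := lerP 0 (dotp b a).
  exfalso; move/negP: nQ; apply; rewrite /Q dvs.
  have y0 : 0 < (dotp a a)^-1 * dotp v a by rewrite mulr_gt0 // invr_gt0.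
  have -> : 2 * dotp b a / dotp a a * dotp v a = 2 * dotp b a * ((dotp a a)^-1 * dotp v a).
    by rewrite !mulrA.
  nra.
rewrite (bigID Q) /= X1 add0r in rhoE.
rewrite rhoE ler_pdivlMr // /f.
nra.
Qed.
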